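(* Let $\omega\ge 2$ and let $\Gamma$ be a finite simple graph on $n$ vertices which is $k$-regular and $\omega$-clique regular. Put $m=\frac{nk}{\omega(\omega-1)}$. Then \[p(C_\omega(\Gamma);\lambda)=(\lambda+\omega)^{m-n}\,p\!\left(\Gamma;\lambda+\omega-\frac{k}{\omega-1}\right),\] where $p(H;\lambda)=\det(\lambda I-A_H)$ denotes the characteristic polynomial of the adjacency matrix $A_H$ of a graph $H$.
   Context: A graph is $\omega$-clique regular if it has a nonempty edge set and every edge is contained in exactly one clique of order $\omega$. The $\omega$-clique graph $C_\omega(\Gamma)$ has as vertices the cliques of order $\omega$ in $\Gamma$ (there are exactly $m=\frac{nk}{\omega(\omega-1)}$ of them), two distinct ones adjacent iff they have nonempty intersection. *)

(* Defs.v *)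
From HB Require Import structures.
From mathcomp Require Import all_boot all_order all_algebra fraction.
Set Implicit Arguments. Unset Strict Implicit. Unset Printing Implicit Defensive.
Import Order.TTheory GRing.Theory Num.Theory.
Local Open Scope ring_scope.

(* A finite simple graph: vertex type T : finType, adjacency e : rel T,
   assumed symmetric and irreflexive in the theorem. *)

Definition adjmx (V : finType) (e : rel V) : 'M[rat]_#|V| :=
  \matrix_(i, j) (e (enum_val i) (enum_val j))%:R.

Definition is_clique (T : finType) (e : rel T) (w : nat) (A : {set T}) : bool :=
  (#|A| == w)%N && [forall x in A, forall y in A, (x != y) ==> e x y].

Definition k_regular (T : finType) (e : rel T) (k : nat) : Prop :=
  forall x : T, #|[set y | e x y]| = k.

Definition clique_regular (T : finType) (e : rel T) (w : nat) : Prop :=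
  (exists x y, e x y) /\
  forall x y, e x y -> exists! A : {set T}, [&& is_clique e w A, x \in A & y \in A].

(* Vertices of the omega-clique graph: the cliques of order w. *)
Definition cliqueT (T : finType) (e : rel T) (w : nat) : finType :=
  {A : {set T} | is_clique e w A}.

(* Adjacency of the omega-clique graph: distinct cliques with nonempty intersection. *)
Definition clique_rel (T : finType) (e : rel T) (w : nat) : rel (cliqueT e w) :=
  fun A B => (A != B) && (val A :&: val B != set0).

Notation ratfun := {fraction {poly rat}}.
Definition tofracp (p : {poly rat}) : ratfun := FracField.tofrac p.
Arguments clique_rel {T} e w.
Arguments cliqueT {T} e w.
Arguments is_clique {T} e w A.

(* Main.v *)
Require Import Defs.
From HB Require Import structures.
From mathcomp Require Import zify.
From mathcomp Require Import all_boot all_order all_algebra fraction.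
Import Order.TTheory GRing.Theory Num.Theory.
Set Implicit Arguments. Unset Strict Implicit. Unset Printing Implicit Defensive.
Local Open Scope ring_scope.

Lemma sumT_enum (T : finType) (F : T -> rat) :
  \sum_(i < #|T|) F (enum_val i) = \sum_(x : T) F x.
Proof. by rewrite -big_enum_val. Qed.

Lemma sum_nat_set (I : finType) (P : pred I) :
  (\sum_(i : I) (P i : nat))%N = #|[set i | P i]|.
Proof.
rewrite -sum1_card [RHS]big_mkcond /=; apply: eq_bigr => i _; rewrite inE.
by case: (P i).
Qed.

Lemma cl_adj (T : finType) (e : rel T) w (C : cliqueT e w) x y :
  x \in val C -> y \in val C -> x != y -> e x y.
Proof.
case/andP: (valP C) => _ /forall_inP H xC yC nxy.
by move/forall_inP: (H x xC) => /(_ y yC) /implyP; apply.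
Qed.

Lemma cl_card (T : finType) (e : rel T) w (C : cliqueT e w) : #|val C| = w.
Proof. by case/andP: (valP C) => /eqP. Qed.

Lemma cl_uniq (T : finType) (e : rel T) w (C D : cliqueT e w) x y :
  clique_regular e w ->
  x \in val C -> y \in val C -> x \in val D -> y \in val D -> x != y -> C = D.
Proof.
move=> [_ cu] xC yC xD yD nxy.
have exy := cl_adj xC yC nxy.
case: (cu x y exy) => A [_ uA].
apply: val_inj; rewrite -(uA (val C)) ?(uA (val D)) //.
  by rewrite xD yD (valP D).
by rewrite xC yC (valP C).
Qed.

Lemma count_pair (T : finType) (e : rel T) w x y :
  clique_regular e w -> x != y ->
  #|[set C : cliqueT e w | (x \in val C) && (y \in val C)]| = e x y.
Proof.
move=> cr nxy; case exy: (e x y).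
  case: (cr) => [_ cu]; case: (cu x y exy) => A [/and3P[cA xA yA] _].
  pose C0 : cliqueT e w := exist _ A cA.
  rewrite /= -(cards1 C0); apply: eq_card => C; rewrite !inE.
  apply/idP/eqP => [/andP[xC yC]|->]; last by rewrite xA yA.
  exact: (cl_uniq (D:=C0) cr xC yC xA yA nxy).
apply/eqP; rewrite cards_eq0; apply/eqP/setP => C; rewrite !inE.
apply/negP => /andP[xC yC]; by rewrite (cl_adj xC yC nxy) in exy.
Qed.

Lemma count_x (T : finType) (e : rel T) w k x :
  irreflexive e -> k_regular e k -> clique_regular e w ->
  (#|[set C : cliqueT e w | x \in val C]| * w.-1 = k)%N.
Proof.
move=> irr kr cr.
pose F (C : cliqueT e w) (y : T) : nat := [&& x \in val C, y \in val C & y != x].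
have E1 : (\sum_(C : cliqueT e w) \sum_(y : T) F C y =
           #|[set C : cliqueT e w | x \in val C]| * w.-1)%N.
  rewrite -sum_nat_set big_distrl /=; apply: eq_bigr => C _.
  rewrite /F; case xC: (x \in val C) => /=; last by rewrite mul0n big1.
  have h1 := cl_card C; have h2 := cardsD1 x (val C); rewrite xC in h2.
  have -> : w.-1 = #|val C :\ x| by clear -h1 h2; set a := #|_ :\ _|; set b := #|_| in h1 h2; lia.
  rewrite mul1n sum_nat_set.
  by apply: eq_card => y; rewrite !inE andbC.
have E2 : (\sum_(y : T) \sum_(C : cliqueT e w) F C y = k)%N.
  rewrite -(kr x) -sum_nat_set; apply: eq_bigr => y _.
  rewrite /F; case: (eqVneq y x) => [->|nyx].
    by rewrite irr big1 // => C _; rewrite !andbF.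
  under eq_bigr do rewrite andbT.
  rewrite sum_nat_set; apply: count_pair => //.
  by apply: contraNneq nyx => ->.
by rewrite -E2 exchange_big E1.
Qed.
Lemma sylv (R : comNzRingType) n m (P : 'M[R]_(n,m)) (Q : 'M[R]_(m,n)) (L : R) :
  L ^+ m * \det (L%:M - P *m Q) = L ^+ n * \det (L%:M - Q *m P).
Proof.
pose B := block_mx (L%:M : 'M_n) P Q (1%:M : 'M_m).
have h1 : block_mx (1%:M : 'M_n) (- P) 0 (L%:M : 'M_m) *m B
          = block_mx (L%:M - P *m Q) 0 (L *: Q) (L%:M : 'M_m).
  rewrite mulmx_block !mul1mx !mul0mx !add0r mulmx1 mulNmx subrr.
  by rewrite !mul_scalar_mx scalemx1.
have h2 : block_mx (1%:M : 'M_n) 0 (- Q) (L%:M : 'M_m) *m B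
          = block_mx (L%:M : 'M_n) P 0 (L%:M - Q *m P).
  rewrite mulmx_block !mul1mx !mul0mx !addr0 mulmx1 -scalar_mxC mulNmx addNr.
  by rewrite addrC mulNmx.
have := congr1 determinant h1; have := congr1 determinant h2.
rewrite !det_mulmx det_lblock det_ublock det_ublock det_lblock !det_scalar expr1n !mul1r.
by move=> -> ->; rewrite mulrC.
Qed.
Lemma det_comp (n : nat) (A : 'M[rat]_n) (q : {poly rat}) :
  \det (q%:M - map_mx polyC A) = char_poly A \Po q.
Proof.
rewrite /char_poly -det_map_mx /char_poly_mx map_mxB /= map_scalar_mx /= comp_polyX.
congr (\det (_ - _)); apply/matrixP => i j; rewrite !mxE /=.
by rewrite comp_polyC.
Qed.

Lemma card_inter (T : finType) (e : rel T) w (C D : cliqueT e w) :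
  clique_regular e w -> C != D ->
  #|val C :&: val D| = (val C :&: val D != set0).
Proof.
move=> cr nCD; rewrite -card_gt0.
have : (#|val C :&: val D| <= 1)%N.
  rewrite leqNgt; apply/negP => /card_gt1P[x [y [xI yI nxy]]].
  move: xI yI; rewrite !inE => /andP[xC xD] /andP[yC yD].
  by rewrite (cl_uniq cr xC yC xD yD nxy) eqxx in nCD.
by case: #|_| => [|[|]].
Qed.

Lemma sum_prod_nat (I : finType) (a b : pred I) :
  \sum_(i : I) ((a i)%:R * (b i)%:R : rat) = #|[set i | a i && b i]|%:R.
Proof.
rewrite -sum_nat_set natr_sum; apply: eq_bigr => i _.
by rewrite -natrM mulnb.
Qed.

Theorem theorem8 (w : nat) (T : finType) (e : rel T) (k : nat) :
  (2 <= w)%N -> symmetric e -> irreflexive e ->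
  k_regular e k -> clique_regular e w ->
  tofracp (char_poly (adjmx (clique_rel e w)))
  = tofracp ('X + (w%:R)%:P) ^ (#|cliqueT e w|%:Z - #|T|%:Z)
    * tofracp ((char_poly (adjmx e)) \Po ('X + (w%:R - k%:R / (w.-1)%:R : rat)%:P)).
Proof.
move=> w2 esym irr kr cr.
set r : rat := k%:R / (w.-1)%:R.
pose N : 'M[rat]_(#|T|, #|cliqueT e w|) :=
  \matrix_(i < #|T|, j < #|cliqueT e w|)
     ((enum_val i : T) \in val (enum_val j : cliqueT e w))%:R.
have G1 : N *m N^T = r%:M + adjmx e.
  apply/matrixP => i i'; rewrite !mxE.
  under eq_bigr do rewrite !mxE.
  rewrite (sumT_enum (fun C : cliqueT e w => (enum_val i \in val C)%:R * (enum_val i' \in val C)%:R)).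
  rewrite sum_prod_nat.
  case: (eqVneq i i') => [<-|nii].
    rewrite irr addr0 mulr1n /r.
    under eq_finset do rewrite andbb.
    have h := count_x (enum_val i) irr kr cr.
    have w1 : (w.-1)%:R != 0 :> rat by rewrite pnatr_eq0 -lt0n; lia.
    by apply/(mulIf w1); rewrite divfK // -natrM h.
  have nxy : enum_val i != enum_val i' by apply: contra_neq nii => /enum_val_inj.
  by rewrite mulr0n add0r count_pair.
have G2 : N^T *m N = (w%:R)%:M + adjmx (clique_rel e w).
  apply/matrixP => j j'; rewrite !mxE.
  under eq_bigr do rewrite !mxE.
  rewrite (sumT_enum (fun x : T => (x \in val (enum_val j))%:R * (x \in val (enum_val j'))%:R)).
  rewrite sum_prod_nat.
  case: (eqVneq j j') => [<-|njj].
    rewrite /clique_rel eqxx /= addr0 mulr1n.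
    under eq_finset do rewrite andbb.
    by rewrite cardsE cl_card.
  have nCD : enum_val j != enum_val j' by apply: contra_neq njj => /enum_val_inj.
  rewrite mulr0n add0r /clique_rel nCD /= -card_inter //.
pose P := map_mx polyC N; pose Q := map_mx polyC N^T.
pose L : {poly rat} := 'X + (w%:R)%:P.
have S := sylv P Q L.
have E1 : L%:M - P *m Q = ('X + (w%:R - r)%:P)%:M - map_mx polyC (adjmx e).
  rewrite /P /Q -map_mxM G1 map_mxD /= map_scalar_mx /= opprD addrA.
  by congr (_ - _); rewrite -raddfB /L polyCB addrA.
have E2 : L%:M - Q *m P = 'X%:M - map_mx polyC (adjmx (clique_rel e w)).
  rewrite /P /Q -map_mxM G2 map_mxD /= map_scalar_mx /= opprD addrA.
  by congr (_ - _); rewrite -raddfB /L addrK.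
rewrite E1 E2 det_comp -/(char_poly_mx _) -/(char_poly _) in S.
have L0 : tofracp L != 0.
  by rewrite /tofracp tofrac_eq0 monic_neq0 // monicXaddC.
move/(congr1 tofracp): S; rewrite /tofracp !rmorphM !rmorphXn /= -/(tofracp L).
set u := tofracp L => S.
rewrite -/(tofracp L) -/u.
rewrite (expfzDr _ _ L0) -exprnN -/u.
have -> : u ^ #|cliqueT e w| = u ^+ #|cliqueT e w| by [].
rewrite mulrAC S mulrC mulKf // expf_neq0 //.
Qed.
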